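(* Let $n,N\ge 1$ and let $r_1,\dots,r_N,r$ be positive integers with $r_i\le r\le\lfloor (n-1)/2\rfloor$. Let $f:\mathbb{R}^{Nn}\to\mathbb{R}$ be nonnegative, level-bounded and continuously differentiable with Lipschitz continuous gradient. Let $(k,\mathcal{A}_1,\dots,\mathcal{A}_k,\Omega,C_1,\dots,C_k)$ be given by one of Variants I, II, III described in the context, let $\lambda>0$, and let $$F_\lambda(y)=f(y)+\delta_\Omega(y)+\sum_{i=1}^k\frac1{2\lambda}\mathrm{dist}^2(\mathcal{A}_i(y),C_i),\qquad h(y)=f(y)+\sum_{i=1}^k\frac1{2\lambda}\|\mathcal{A}_i(y)\|_F^2 .$$ Consider the following algorithm (vNPG$_{\rm major}$). Choose $y^0\in\Omega$, $L_{\max}>L_{\min}>0$, $\tau>1$, $c>0$ and an integer $M\ge 0$. At iteration $l=0,1,\dots$: pick any $\xi^l=\sum_{i=1}^k\frac1\lambda\mathcal{A}_i^*(Y_i)$ with $Y_i\in\mathcal{P}_{C_i}(\mathcal{A}_i(y^l))$, choose any $L_l^0\in[L_{\min},L_{\max}]$, and for $i=0,1,\dots$ set $L_{l,i}=L_l^0\tau^i$ and pick any $$u_i^l\in\mathcal{P}^s_\Omega\Big(y^l-\tfrac1{L_{l,i}}(\nabla h(y^l)-\xi^l);\,y^l\Big)$$ until some $u_i^l$ satisfies $$F_\lambda(u_i^l)\le\max_{[l-M]_+\le j\le l}F_\lambda(y^j)-\frac c2\|u_i^l-y^l\|^2 ;$$ then set $\bar L_l=L_{l,i}$ and $y^{l+1}=u_i^l$.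 Then: (i) for every $l$, the inner loop over $i$ terminates after finitely many steps (the line-search criterion is well-defined); (ii) the sequence $\{\bar L_l\}$ is bounded; (iii) for every $\epsilon>0$ there exists $l$ such that the following three conditions hold simultaneously: $$\|y^{l+1}-y^l\|\le\epsilon,\qquad F_\lambda(y^l)\le F_\lambda(y^0),$$ $$\mathrm{dist}\Big(0,\ \nabla f(y^l)+N_\Omega(y^{l+1})+\sum_{i=1}^k\frac1\lambda\mathcal{A}_i^*\big(\mathcal{A}_i(y^l)-\mathcal{P}_{C_i}(\mathcal{A}_i(y^l))\big)\Big)\le\epsilon .$$
   Context: For $x\in\mathbb{R}^n$ and an integer $1\le l\le n$, the Hankel matrix $\mathcal{H}_l(x)\in\mathbb{R}^{l\times(n-l+1)}$ has $(i,j)$ entry $x(i+j-1)$. For $y=(y_1^\top,\dots,y_N^\top)^\top\in\mathbb{R}^{Nn}$ with $y_i\in\mathbb{R}^n$, define linear maps $\mathcal{L}_i(y)=\mathcal{H}_{r_i+1}(y_i)$ ($i=1,\dots,N$) and $\mathcal{L}(y)=[\mathcal{H}_{r+1}(y_1)\ \cdots\ \mathcal{H}_{r+1}(y_N)]$. The three variants are: Variant I: $k=1$, $\mathcal{A}_1=\mathcal{L}$, $\Omega=\{y:\mathrm{rank}(\mathcal{L}_i(y))\le r_i,\ i=1,\dots,N\}$, $C_1=\{Y:\mathrm{rank}(Y)\le r\}$. Variant II: $k=N$, $\mathcal{A}_i=\mathcal{L}_i$, $\Omega=\{y:\mathrm{rank}(\mathcal{L}(y))\le r\}$, $C_i=\{Y:\mathrm{rank}(Y)\le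 r_i\}$. Variant III: $k=N+1$, $\mathcal{A}_i=\mathcal{L}_i$ ($i\le N$), $\mathcal{A}_{N+1}=\mathcal{L}$, $\Omega=\mathbb{R}^{Nn}$, $C_i=\{Y:\mathrm{rank}(Y)\le r_i\}$ ($i\le N$), $C_{N+1}=\{Y:\mathrm{rank}(Y)\le r\}$. Distances and projections $\mathcal{P}_{C}(X)$ (set of nearest points) for matrix sets use the Frobenius norm; $\mathcal{A}_i^*$ is the adjoint; $\delta_\Omega$ is the indicator function of $\Omega$; $N_\Omega(y)$ is the limiting (Mordukhovich) normal cone of $\Omega$ at $y$ in the sense of Rockafellar–Wets; set-valued expressions are Minkowski sums. Pseudo-projection: for a nonempty closed $\Omega\subseteq\mathbb{R}^m$, $u\in\Omega$, $x\in\mathbb{R}^m$, $\mathcal{P}^s_\Omega(x;u)$ is the set of all $y\in\Omega$ with $x-y\in N_\Omega(y)$ and $\|y-x\|\le\|u-x\|$. *)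

(* Defs.v *)
From HB Require Import structures.
From mathcomp Require Import all_boot all_order all_algebra.
From mathcomp Require Import boolp classical_sets reals ereal.
Set Implicit Arguments. Unset Strict Implicit. Unset Printing Implicit Defensive.
Import Order.TTheory GRing.Theory Num.Theory.
Local Open Scope classical_set_scope.
Local Open Scope ring_scope.

Section Defs.
Variable R : realType.

Definition fip (p q : nat) (A B : 'M[R]_(p, q)) : R :=
  \sum_(i < p) \sum_(j < q) A i j * B i j.
Definition fnorm (p q : nat) (A : 'M[R]_(p, q)) : R := Num.sqrt (fip A A).

(* vectors of R^m are row vectors 'rV[R]_m; the Euclidean norm is fnorm *)
Definition coord (m : nat) (x : 'rV[R]_m) (k : nat) : R :=
  if insub k is Some i then x 0 i else 0.

(* Hankel matrix H_l(x) in R^{l x (n-l+1)}, entry (i,j) = x(i+j-1) (1-based) *)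
Definition hankel (n l : nat) (x : 'rV[R]_n) : 'M[R]_(l, n - l + 1) :=
  \matrix_(i < l, j < n - l + 1) coord x (i + j).

(* y = (y_1^T, ..., y_N^T)^T in R^{Nn}; block i (0-based) *)
Definition yblock (N n : nat) (y : 'rV[R]_(N * n)) (i : nat) : 'rV[R]_n :=
  \row_(t < n) coord y (i * n + t).

Definition Lop_i (N n : nat) (ri : nat) (i : nat) (y : 'rV[R]_(N * n)) :=
  hankel (ri.+1) (yblock y i).

(* L(y) = [H_{r+1}(y_1) ... H_{r+1}(y_N)], horizontal concatenation of the N
   Hankel blocks of width w = n-(r+1)+1: column b lies in block b / w at
   local column b mod w, so the entry is y_{b/w}(a + (b mod w)) (0-based),
   i.e. hankel (r.+1) (yblock y (b %/ w)) a (b %% w). *)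
Definition Lop (N n r : nat) (y : 'rV[R]_(N * n)) :
    'M[R]_(r.+1, N * (n - r.+1 + 1)) :=
  \matrix_(a < r.+1, b < N * (n - r.+1 + 1))
     coord (yblock y (b %/ (n - r.+1 + 1))) (a + b %% (n - r.+1 + 1)).

(* adjoint of a linear map A : R^m -> R^{p x q} w.r.t. the Frobenius product:
   (A^* Y)_j = <Y, A(e_j)>_F *)
Definition adj (m p q : nat) (A : 'rV[R]_m -> 'M[R]_(p, q)) (Y : 'M[R]_(p, q))
  : 'rV[R]_m := \row_(j < m) fip Y (A (delta_mx 0 j)).

Definition proj (p q : nat) (C : set 'M[R]_(p, q)) (X : 'M[R]_(p, q)) :
    set 'M[R]_(p, q) :=
  [set Y | C Y /\ forall Z, C Z -> fnorm (X - Y) <= fnorm (X - Z)].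
Definition dist (p q : nat) (X : 'M[R]_(p, q)) (C : set 'M[R]_(p, q)) : R :=
  inf [set fnorm (X - Z) | Z in C].

(* extended-real distance from a vector to a set (+oo for the empty set) *)
Definition edist (m : nat) (x : 'rV[R]_m) (S : set 'rV[R]_m) : \bar R :=
  ereal_inf [set (fnorm (x - w))%:E | w in S].

(* ---------- a "component" (A_i, C_i) with C_i = {Y | rank Y <= crk} *)
Record comp (m : nat) := Comp {
  cp : nat; cq : nat;
  cA : 'rV[R]_m -> 'M[R]_(cp, cq);
  crk : nat }.

Definition rkset (m : nat) (c : comp m) : set 'M[R]_(cp c, cq c) :=
  [set Y | (\rank Y <= crk c)%N].
Arguments rkset {m} c.
Arguments cA {m} c.
Arguments cp {m} c.
Arguments cq {m} c.
Arguments crk {m} c.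

Inductive variant := VariantI | VariantII | VariantIII.

Definition compLi (N n : nat) (rs : 'I_N -> nat) (i : 'I_N) : comp (N * n) :=
  @Comp (N * n) (rs i).+1 (n - (rs i).+1 + 1) (Lop_i (rs i) i) (rs i).
Definition compL (N n r : nat) : comp (N * n) :=
  @Comp (N * n) r.+1 (N * (n - r.+1 + 1)) (@Lop N n r) r.

Definition comps (N n r : nat) (rs : 'I_N -> nat) (v : variant)
  : seq (comp (N * n)) :=
  match v with
  | VariantI => [:: compL N n r]
  | VariantII => [seq @compLi N n rs i | i <- enum 'I_N]
  | VariantIII => rcons [seq @compLi N n rs i | i <- enum 'I_N] (compL N n r)
  end.

Definition Omega (N n r : nat) (rs : 'I_N -> nat) (v : variant)
  : set 'rV[R]_(N * n) :=
  match v with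
  | VariantI => [set y | forall i : 'I_N, (\rank (Lop_i (rs i) i y) <= rs i)%N]
  | VariantII => [set y | (\rank (@Lop N n r y) <= r)%N]
  | VariantIII => setT
  end.

Definition is_gradient (m : nat) (f : 'rV[R]_m -> R) (g : 'rV[R]_m -> 'rV[R]_m) :=
  forall x eps, 0 < eps -> exists2 delta, 0 < delta & forall z,
    fnorm (z - x) < delta ->
    `|f z - f x - fip (g x) (z - x)| <= eps * fnorm (z - x).

Definition lipschitz (m : nat) (g : 'rV[R]_m -> 'rV[R]_m) :=
  exists Lg : R, forall x z, fnorm (g x - g z) <= Lg * fnorm (x - z).

Definition level_bounded (m : nat) (f : 'rV[R]_m -> R) :=
  forall alpha : R, exists B : R, forall y, f y <= alpha -> fnorm y <= B.

Definition reg_normal (m : nat) (O : set 'rV[R]_m) (x : 'rV[R]_m) : set 'rV[R]_m :=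
  [set v | O x /\ forall eps, 0 < eps -> exists2 delta, 0 < delta &
     forall z, O z -> fnorm (z - x) < delta -> fip v (z - x) <= eps * fnorm (z - x)].

Definition seq_cvg (m : nat) (s : nat -> 'rV[R]_m) (x : 'rV[R]_m) :=
  forall eps, 0 < eps -> exists K, forall k, (K <= k)%N -> fnorm (s k - x) < eps.

Definition lim_normal (m : nat) (O : set 'rV[R]_m) (x : 'rV[R]_m) : set 'rV[R]_m :=
  [set v | O x /\ exists (xs vs : nat -> 'rV[R]_m),
     (forall k, O (xs k)) /\ seq_cvg xs x /\ seq_cvg vs v /\
     forall k, reg_normal O (xs k) (vs k)].

Definition pseudo_proj (m : nat) (O : set 'rV[R]_m) (x u : 'rV[R]_m) : set 'rV[R]_m :=
  [set z | O z /\ lim_normal O z (x - z) /\ fnorm (z - x) <= fnorm (u - x)].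

Definition indicator (m : nat) (O : set 'rV[R]_m) (y : 'rV[R]_m) : \bar R :=
  if y \in O then 0%E else +oo%E.

Definition Flam (m : nat) (f : 'rV[R]_m -> R) (O : set 'rV[R]_m)
  (cs : seq (comp m)) (lam : R) (y : 'rV[R]_m) : \bar R :=
  ((f y)%:E + indicator O y +
   (\sum_(c <- cs) (2 * lam)^-1 * dist (cA c y) (rkset c) ^+ 2)%:E)%E.

Definition hfun (m : nat) (f : 'rV[R]_m -> R) (cs : seq (comp m)) (lam : R)
  (y : 'rV[R]_m) : R :=
  f y + \sum_(c <- cs) (2 * lam)^-1 * fnorm (cA c y) ^+ 2.

Fixpoint xiset (m : nat) (lam : R) (cs : seq (comp m)) (y : 'rV[R]_m)
  : set 'rV[R]_m :=
  match cs with
  | [::] => [set 0]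
  | c :: cs' => [set w | exists Y s, proj (rkset c) (cA c y) Y /\
                   xiset lam cs' y s /\ w = lam^-1 *: adj (cA c) Y + s]
  end.

Fixpoint resset (m : nat) (lam : R) (cs : seq (comp m)) (y : 'rV[R]_m)
  : set 'rV[R]_m :=
  match cs with
  | [::] => [set 0]
  | c :: cs' => [set w | exists Y s, proj (rkset c) (cA c y) Y /\
                   resset lam cs' y s /\
                   w = lam^-1 *: adj (cA c) (cA c y - Y) + s]
  end.

(* max_{[l-M]_+ <= j <= l} F(y^j)   (nat subtraction is truncated) *)
Definition maxF (m : nat) (F : 'rV[R]_m -> \bar R) (M : nat)
  (y : nat -> 'rV[R]_m) (l : nat) : \bar R :=
  \big[maxe/-oo%E]_(l - M <= j < l.+1) F (y j).

Definition ls_ok (m : nat) (F : 'rV[R]_m -> \bar R) (M : nat) (c : R)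
  (y : nat -> 'rV[R]_m) (l : nat) (u : 'rV[R]_m) : Prop :=
  (F u <= maxF F M y l - (c / 2 * fnorm (u - y l) ^+ 2)%:E)%E.

Definition trial (m : nat) (gh : 'rV[R]_m -> 'rV[R]_m) (yl xi : 'rV[R]_m)
  (L0 tau : R) (i : nat) : 'rV[R]_m :=
  yl - (L0 * tau ^+ i)^-1 *: (gh yl - xi).

(* one outer iteration l: y^{l+1} and bar L_l = Lb are produced by some
   admissible choice of xi^l, L_l^0, and inner candidates u_0,...,u_i,
   where u_i is the first candidate passing the test *)
Definition alg_step (m : nat) (O : set 'rV[R]_m) (Xi : 'rV[R]_m -> set 'rV[R]_m)
  (gh : 'rV[R]_m -> 'rV[R]_m) (F : 'rV[R]_m -> \bar R) (M : nat)
  (c Lmin Lmax tau : R) (y : nat -> 'rV[R]_m) (l : nat) (Lb : R) : Prop :=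
  exists xi, Xi (y l) xi /\
  exists L0, (Lmin <= L0 <= Lmax) /\
  exists (i : nat) (u : nat -> 'rV[R]_m),
    (forall j, (j <= i)%N -> pseudo_proj O (trial gh (y l) xi L0 tau j) (y l) (u j)) /\
    (forall j, (j < i)%N -> ~ ls_ok F M c y l (u j)) /\
    ls_ok F M c y l (u i) /\
    Lb = L0 * tau ^+ i /\ y l.+1 = u i.

Definition stat_set (m : nat) (O : set 'rV[R]_m) (gf : 'rV[R]_m -> 'rV[R]_m)
  (lam : R) (cs : seq (comp m)) (y : nat -> 'rV[R]_m) (l : nat) : set 'rV[R]_m :=
  [set w | exists vN s, lim_normal O (y l.+1) vN /\ resset lam cs (y l) s /\
    w = gf (y l) + vN + s].

End Defs.

(* Main.v *)
From HB Require Import structures.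
From mathcomp Require Import all_boot all_order all_algebra.
From mathcomp Require Import boolp classical_sets reals ereal topology normedtype sequences.
From mathcomp Require Import ring lra.
Require Import Defs.
Import Order.TTheory GRing.Theory Num.Theory numFieldNormedType.Exports.
Set Implicit Arguments. Unset Strict Implicit. Unset Printing Implicit Defensive.
Local Open Scope classical_set_scope.
Local Open Scope ring_scope.
Section Fip.
Variable R : realType.
Variables p q : nat.
Implicit Types A B C : 'M[R]_(p, q).

Lemma fipC A B : fip A B = fip B A.
Proof. by apply: eq_bigr => i _; apply: eq_bigr => j _; rewrite mulrC. Qed.

Lemma fipDl A B C : fip (A + B) C = fip A C + fip B C.
Proof.
rewrite /fip -big_split; apply: eq_bigr => i _; rewrite -big_split.
by apply: eq_bigr => j _; rewrite !mxE mulrDl.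
Qed.

Lemma fipZl a A B : fip (a *: A) B = a * fip A B.
Proof.
rewrite /fip mulr_sumr; apply: eq_bigr => i _; rewrite mulr_sumr.
by apply: eq_bigr => j _; rewrite !mxE mulrA.
Qed.

Lemma fipNl A B : fip (- A) B = - fip A B.
Proof. by rewrite -scaleN1r fipZl mulN1r. Qed.

Lemma fipBl A B C : fip (A - B) C = fip A C - fip B C.
Proof. by rewrite fipDl fipNl. Qed.

Lemma fipDr A B C : fip A (B + C) = fip A B + fip A C.
Proof. by rewrite fipC fipDl !(fipC A). Qed.
Lemma fipZr a A B : fip A (a *: B) = a * fip A B.
Proof. by rewrite fipC fipZl fipC. Qed.
Lemma fipNr A B : fip A (- B) = - fip A B.
Proof. by rewrite fipC fipNl fipC. Qed.
Lemma fipBr A B C : fip A (B - C) = fip A B - fip A C.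
Proof. by rewrite fipDr fipNr. Qed.
Lemma fip0l A : fip 0 A = 0.
Proof. by rewrite -(scale0r 0) fipZl mul0r. Qed.
Lemma fip0r A : fip A 0 = 0.
Proof. by rewrite fipC fip0l. Qed.

Lemma fip_ge0 A : 0 <= fip A A.
Proof. by apply: sumr_ge0 => i _; apply: sumr_ge0 => j _; by rewrite -expr2 sqr_ge0. Qed.

Lemma entry_le_fip A i j : A i j ^+ 2 <= fip A A.
Proof.
rewrite /fip (bigD1 i) //= (bigD1 j) //= -expr2 -addrA lerDl.
apply: addr_ge0; first by apply: sumr_ge0 => k _; by rewrite -expr2 sqr_ge0.
by apply: sumr_ge0 => k _; apply: sumr_ge0 => l _; by rewrite -expr2 sqr_ge0.
Qed.

Lemma fip_eq0 A : fip A A = 0 -> A = 0.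
Proof.
move=> h; apply/matrixP => i j; rewrite mxE.
have := entry_le_fip A i j; rewrite h => h2.
by apply/eqP; rewrite -sqrf_eq0 eq_le h2 sqr_ge0.
Qed.

Lemma fnorm_ge0 A : 0 <= fnorm A.
Proof. exact: sqrtr_ge0. Qed.

Lemma fnorm_sq A : fnorm A ^+ 2 = fip A A.
Proof. by rewrite sqr_sqrtr // fip_ge0. Qed.

Lemma fnorm0 : fnorm (0 : 'M[R]_(p, q)) = 0.
Proof. by rewrite /fnorm fip0l sqrtr0. Qed.

Lemma fnormZ a A : fnorm (a *: A) = `|a| * fnorm A.
Proof. by rewrite /fnorm fipZl fipZr mulrA -expr2 sqrtrM ?sqr_ge0 // sqrtr_sqr. Qed.

Lemma fnormN A : fnorm (- A) = fnorm A.
Proof. by rewrite -scaleN1r fnormZ normrN normr1 mul1r. Qed.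

Lemma fnormB A B : fnorm (A - B) = fnorm (B - A).
Proof. by rewrite -fnormN opprB. Qed.

Lemma fnorm_sqD A B : fnorm (A + B) ^+ 2 = fnorm A ^+ 2 + 2 * fip A B + fnorm B ^+ 2.
Proof. by rewrite !fnorm_sq fipDl !fipDr (fipC B A); ring. Qed.

Lemma fnorm_sqB A B : fnorm (A - B) ^+ 2 = fnorm A ^+ 2 - 2 * fip A B + fnorm B ^+ 2.
Proof. by rewrite fnorm_sqD fnormN fipNr; ring. Qed.

Lemma CS A B : fip A B <= fnorm A * fnorm B.
Proof.
have [/eqP B0|Bn0] := boolP (fip B B == 0).
  by rewrite (fip_eq0 B0) fip0r mulr_ge0 // fnorm_ge0.
have cpos : 0 < fip B B by rewrite lt_def Bn0 fip_ge0.
set a := fip A A; set b := fip A B; set c := fip B B.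
have key : b ^+ 2 <= a * c.
  have := fip_ge0 (A - (b / c) *: B).
  rewrite fipBl !fipBr !fipZl !fipZr -/a -/b -/c (fipC B A) -/b.
  have -> : a - b / c * b - (b / c * b - b / c * (b / c * c)) = a - b ^+ 2 / c.
    by field; rewrite gt_eqF.
  by rewrite subr_ge0 ler_pdivrMr.
have [b0|b0] := leP b 0; first by apply: le_trans b0 _; rewrite mulr_ge0 ?fnorm_ge0.
rewrite -(ler_pXn2r (n:=2)) // ?nnegrE ?mulr_ge0 ?fnorm_ge0 ?(ltW b0) //.
by rewrite exprMn !fnorm_sq.
Qed.

Lemma CSabs A B : `|fip A B| <= fnorm A * fnorm B.
Proof.
rewrite ler_norml CS andbT -(fnormN A) lerNl -fipNl; exact: CS.
Qed.

Lemma fnormD A B : fnorm (A + B) <= fnorm A + fnorm B.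
Proof.
rewrite -(ler_pXn2r (n:=2)) ?nnegrE ?addr_ge0 ?fnorm_ge0 //.
rewrite fnorm_sqD sqrrD lerD2r lerD2l; have := CS A B; lra.
Qed.

Lemma fnorm_triB A B C : fnorm (A - C) <= fnorm (A - B) + fnorm (B - C).
Proof. have -> : A - C = (A - B) + (B - C) by rewrite addrA subrK. exact: fnormD. Qed.

Lemma entry_le_fnorm A i j : `|A i j| <= fnorm A.
Proof.
rewrite -(ler_pXn2r (n:=2)) ?nnegrE ?fnorm_ge0 // real_normK ?num_real //.
by rewrite fnorm_sq entry_le_fip.
Qed.

Lemma fip_le_entries A e : (forall i j, `|A i j| <= e) -> fip A A <= (p * q)%:R * e ^+ 2.
Proof.
move=> h; rewrite /fip.
apply: le_trans (_ : \sum_(i < p) \sum_(j < q) e ^+ 2 <= _).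
  apply: ler_sum => i _; apply: ler_sum => j _.
  rewrite -expr2 -real_normK ?num_real //; apply: lerXn2r; rewrite ?nnegrE //.
  by apply: le_trans (h i j).
by rewrite sumr_const card_ord sumr_const card_ord -mulrnA mulr_natl mulnC.
Qed.

End Fip.
Section Coordlike.
Variable R : realType.

Definition coordlike (m p q : nat) (A : 'rV[R]_m -> 'M[R]_(p, q)) :=
  forall a b, exists k, forall y, A y a b = coord y k.

Lemma coordD m (y z : 'rV[R]_m) a k : coord (a *: y + z) k = a * coord y k + coord z k.
Proof. by rewrite /coord; case: insubP => [i _ _|_]; rewrite ?mxE ?mulr0 ?addr0. Qed.

Lemma coord_le m (y : 'rV[R]_m) k : `|coord y k| <= fnorm y.
Proof. rewrite /coord; case: insubP => [i _ _|_]; rewrite ?normr0 ?fnorm_ge0 //; exact: entry_le_fnorm. Qed.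

Section CL.
Variables (m p q : nat) (A : 'rV[R]_m -> 'M[R]_(p, q)).
Hypothesis hA : coordlike A.

Lemma clin a y z : A (a *: y + z) = a *: A y + A z.
Proof.
apply/matrixP => i j; have [k hk] := hA i j.
by rewrite !mxE !hk coordD.
Qed.

Lemma cl0 : A 0 = 0.
Proof. by have := clin (-1) 0 0; rewrite scaler0 addr0 scaleN1r addNr. Qed.

Lemma clD y z : A (y + z) = A y + A z.
Proof. by have := clin 1 y z; rewrite !scale1r. Qed.

Lemma clZ a y : A (a *: y) = a *: A y.
Proof. by rewrite -(addr0 (a *: y)) clin cl0 addr0. Qed.

Lemma clN y : A (- y) = - A y.
Proof. by rewrite -scaleN1r clZ scaleN1r. Qed.

Lemma clB y z : A (y - z) = A y - A z.
Proof. by rewrite clD clN. Qed.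

Lemma cl_bound y : fnorm (A y) ^+ 2 <= (p * q)%:R * fnorm y ^+ 2.
Proof.
rewrite fnorm_sq; apply: fip_le_entries => i j.
have [k hk] := hA i j; rewrite hk; exact: coord_le.
Qed.

Lemma cl_sum (I : finType) (F : I -> 'rV[R]_m) : A (\sum_i F i) = \sum_i A (F i).
Proof. exact: (big_morph A clD cl0). Qed.

Lemma adjE (Y : 'M[R]_(p, q)) d : fip (adj A Y) d = fip Y (A d).
Proof.
have -> : d = \sum_(j < m) d 0 j *: delta_mx 0 j.
  apply/matrixP => i j; rewrite (ord1 i) summxE (bigD1 j) //= big1 ?addr0.
    by rewrite !mxE !eqxx mulr1.
  by move=> k kj; rewrite !mxE eqxx /= eq_sym (negbTE kj) mulr0.
rewrite cl_sum.
rewrite (big_morph (fip Y) (fipDr Y) (fip0r Y)).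
rewrite (big_morph (fip (adj A Y)) (fipDr _) (fip0r _)).
apply: eq_bigr => j _; rewrite clZ !fipZr; congr (_ * _).
rewrite /fip big_ord1 (bigD1 j) //= big1 ?addr0.
  by rewrite !mxE !eqxx mulr1.
by move=> k /negbTE kj; rewrite !mxE kj andbF mulr0.
Qed.

End CL.

Lemma adj_linY m p q (A : 'rV[R]_m -> 'M[R]_(p, q)) a Y Z :
  adj A (a *: Y + Z) = a *: adj A Y + adj A Z.
Proof. by apply/matrixP => i j; rewrite !mxE fipDl fipZl. Qed.

Lemma adjB m p q (A : 'rV[R]_m -> 'M[R]_(p, q)) Y Z :
  adj A (Y - Z) = adj A Y - adj A Z.
Proof. by apply/matrixP => i j; rewrite !mxE fipBl. Qed.

Fixpoint allcl m (cs : seq (comp R m)) : Prop :=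
  match cs with [::] => True | c :: cs' => coordlike (cA c) /\ allcl cs' end.

Lemma allcl_rcons m (cs : seq (comp R m)) c : allcl cs -> coordlike (cA c) -> allcl (rcons cs c).
Proof. by elim: cs => [|d cs IH] /= => [_ h|[h1 h2] h]; split => //; apply: IH. Qed.

Lemma coord_yblock N n (y : 'rV[R]_(N * n)) i t :
  coord (yblock y i) t = coord y (if (t < n)%N then (i * n + t)%N else (N * n)%N).
Proof.
rewrite /coord; case: insubP => [u ut <-|tn]; rewrite ?mxE.
  by rewrite ltn_ord /coord.
rewrite (negbTE tn); case: insubP => // u; by rewrite ltnn.
Qed.

Lemma cl_Lop N n r : coordlike (@Lop R N n r).
Proof.
move=> a b; eexists => y; rewrite mxE coord_yblock; reflexivity.
Qed.

Lemma cl_Lopi N n ri (i : nat) : coordlike (@Lop_i R N n ri i).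
Proof.
move=> a b; eexists => y; rewrite /Lop_i /hankel mxE coord_yblock; reflexivity.
Qed.

Lemma allcl_comps n N r (rs : 'I_N -> nat) v : allcl (comps R n r rs v).
Proof.
have hmap : forall l : seq 'I_N, allcl [seq @compLi R N n rs i | i <- l].
  by elim => [|i l IH] //=; split => //; apply: cl_Lopi.
case: v => /=; first by split => //; apply: cl_Lop.
  exact: hmap.
by apply: allcl_rcons; [apply: hmap | apply: cl_Lop].
Qed.

End Coordlike.
Section BW.
Variable R : realType.

Definition rcvg (u : nat -> R) (l : R) :=
  forall eps, 0 < eps -> exists K, forall k, (K <= k)%N -> `|u k - l| < eps.

Definition mcvg p q (Z : nat -> 'M[R]_(p, q)) (L : 'M[R]_(p, q)) :=
  forall eps, 0 < eps -> exists K, forall k, (K <= k)%N -> fnorm (Z k - L) < eps.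

Definition sclosed p q (S : set 'M[R]_(p, q)) :=
  forall Z L, (forall k, S (Z k)) -> mcvg Z L -> S L.

Lemma incr_ge (f : nat -> nat) : increasing_seq f -> forall k, (k <= f k)%N.
Proof.
move=> hf; elim => [|k IH] //.
have : (f k < f k.+1)%N.
  rewrite ltnNge; apply/negP => h.
  have : (k.+1 <= k)%N by rewrite -hf.
  by rewrite ltnn.
by apply: leq_ltn_trans.
Qed.

Lemma incr_comp (f g : nat -> nat) : increasing_seq f -> increasing_seq g -> increasing_seq (f \o g).
Proof. by move=> hf hg m n /=; rewrite hf; apply: hg. Qed.

Lemma bw1 (u : nat -> R) B : (forall k, `|u k| <= B) ->
  exists f l, increasing_seq f /\ rcvg (u \o f) l.
Proof.
move=> hB.
have bu : bounded_fun u.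
  exists B; split; first exact: num_real.
  by move=> M BM x _; exact: le_trans (hB x) (ltW BM).
have [f hf /cvg_ex [l hl]] := bolzano_weierstrass bu.
exists f, l; split => // e e0.
have /cvgrPdist_lt /(_ e e0) [K _ hK] := hl.
by exists K => k Kk; rewrite distrC; apply: hK.
Qed.

Lemma fnorm_le_entries p q (A : 'M[R]_(p, q)) e : 0 <= e -> (forall i j, `|A i j| <= e) ->
  fnorm A <= (p * q).+1%:R * e.
Proof.
move=> e0 h.
rewrite -(ler_pXn2r (n:=2)) ?nnegrE ?fnorm_ge0 ?mulr_ge0 // fnorm_sq.
apply: le_trans (fip_le_entries h) _.
rewrite exprMn ler_wpM2r ?sqr_ge0 //.
rewrite -natrX ler_nat; apply: leq_trans (leqnSn _) _.
by rewrite -[X in (X <= _)%N]muln1 leq_mul // expn2 leq_mul.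
Qed.

Lemma bwM p q (Z : nat -> 'M[R]_(p, q)) B : (forall k i j, `|Z k i j| <= B) ->
  exists f L, increasing_seq f /\ mcvg (Z \o f) L.
Proof.
move=> hB.
have gen : forall s : seq ('I_p * 'I_q), exists f (L : 'M[R]_(p, q)), increasing_seq f /\
   forall eps, 0 < eps -> exists K, forall k, (K <= k)%N -> forall ij, ij \in s ->
     `|Z (f k) ij.1 ij.2 - L ij.1 ij.2| < eps.
  elim => [|[i j] s [f [L [hf hL]]]].
    by exists id, 0; split => // e e0; exists 0%N.
  have [g [l [hg hl]]] := bw1 (fun k => hB (f k) i j).
  exists (f \o g), (\matrix_(a, b) if (a == i) && (b == j) then l else L a b).
  split; first exact: incr_comp.
  move=> e e0; have [K1 hK1] := hL e e0; have [K2 hK2] := hl e e0.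
  exists (maxn K1 K2) => k; rewrite geq_max => /andP [k1 k2] [a b].
  rewrite !mxE /=.
  case: ifP => [/andP [/eqP -> /eqP ->] _|hab]; first exact: hK2.
  rewrite inE => /orP [/eqP [ea eb]|abs]; first by rewrite ea eb !eqxx in hab.
  apply: (hK1 _ _ (a, b)) => //.
  by apply: leq_trans k1 _; apply: incr_ge.
have [f [L [hf hL]]] := gen (enum (predT : pred ('I_p * 'I_q))).
exists f, L; split => // e e0.
have ee0 : 0 < e / (p * q).+2%:R by rewrite divr_gt0.
have [K hK] := hL _ ee0.
exists K => k Kk /=.
apply: le_lt_trans (fnorm_le_entries (ltW ee0) _) _.
  move=> a b; rewrite !mxE; apply: ltW; apply: (hK k Kk (a, b)); by rewrite mem_enum.
by rewrite mulrA ltr_pdivrMr ?ltr0n // mulrC ltr_pM2l // ltr_nat.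
Qed.

Lemma nearest p q (S : set 'M[R]_(p, q)) Z0 X : sclosed S -> S Z0 -> exists Y, proj S X Y.
Proof.
move=> cS SZ0.
set D := [set fnorm (X - Z) | Z in S].
have hlb : has_lbound D by exists 0 => _ [Z _ <-]; exact: fnorm_ge0.
have hne : D !=set0 by exists (fnorm (X - Z0)); exists Z0.
have hinf : has_inf D by split.
set d := inf D.
have dle : forall W, S W -> d <= fnorm (X - W).
  by move=> W SW; apply: ge_inf => //; exists W.
have : forall k : nat, exists Z, S Z /\ fnorm (X - Z) < d + (k.+1%:R)^-1.
  move=> k; have [_ [Z SZ <-] hZ] := inf_adherent (eps := (k.+1%:R)^-1) (ltac:(by rewrite invr_gt0 ltr0n) : 0 < (k.+1%:R : R)^-1) hinf.
  by exists Z.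
move=> /choice [Zs hZs].
have d0 : 0 <= d by apply: lb_le_inf => // _ [Z _ <-]; exact: fnorm_ge0.
have hB : forall k i j, `|Zs k i j| <= fnorm X + (d + 1).
  move=> k i j; apply: le_trans (entry_le_fnorm _ i j) _.
  have -> : Zs k = X - (X - Zs k) by rewrite opprB addrC subrK.
  apply: le_trans (fnormD _ _) _; rewrite fnormN lerD2l.
  apply: le_trans (ltW (hZs k).2) _; rewrite lerD2l invf_le1 ?ler1n ?ltr0n //.
have [f [L [hf hL]]] := bwM hB.
have SL : S L by apply: (cS _ _ _ hL) => k; exact: (hZs _).1.
exists L; split => // W SW; apply: le_trans (dle W SW).
apply/ler_addgt0Pr => e e0.
have e20 : 0 < e / 2 by rewrite divr_gt0.
have [K hK] := hL _ e20.
have [k0 hk0] : exists k0 : nat, (e / 2)^-1 < k0%:R.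
  exists (Num.Def.archi_bound (e / 2)^-1); apply: archi_boundP; rewrite invr_ge0 ltW //.
set k := maxn K k0.
apply: le_trans (fnorm_triB X (Zs (f k)) L) _.
have h1 := (hZs (f k)).2.
have h2 := hK k (leq_maxl _ _).
rewrite /= in h2.
have h3 : ((f k).+1%:R)^-1 <= e / 2.
  rewrite -[X in _ <= X]invrK lef_pV2 ?posrE ?invr_gt0 ?ltr0n //.
  apply: le_trans (ltW hk0) _; rewrite ler_nat.
  apply: leq_trans (leq_maxr K k0) _; apply: leq_trans (incr_ge hf k) _; exact: leqnSn.
have : fnorm (X - Zs (f k)) + fnorm (Zs (f k) - L) <= d + e / 2 + e / 2.
  by apply: lerD; [apply: le_trans (ltW h1) _; rewrite lerD2l | apply: ltW].
by rewrite -addrA -splitr.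
Qed.

End BW.
Section RankClosed.
Variable R : realType.

Lemma cvg_sumR (I : Type) (r : seq I) (F : I -> nat -> R) (l : I -> R) :
  (forall i, F i @ \oo --> l i) ->
  (fun k => \sum_(i <- r) F i k) @ \oo --> \sum_(i <- r) l i.
Proof.
move=> h; elim: r => [|i r IH].
  rewrite big_nil; under eq_cvg do rewrite big_nil; exact: cvg_cst.
rewrite big_cons; under eq_cvg do rewrite big_cons.
exact: cvgD.
Qed.

Lemma cvg_prodR (I : Type) (r : seq I) (F : I -> nat -> R) (l : I -> R) :
  (forall i, F i @ \oo --> l i) ->
  (fun k => \prod_(i <- r) F i k) @ \oo --> \prod_(i <- r) l i.
Proof.
move=> h; elim: r => [|i r IH].
  rewrite big_nil; under eq_cvg do rewrite big_nil; exact: cvg_cst.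
rewrite big_cons; under eq_cvg do rewrite big_cons.
exact: cvgM.
Qed.

Lemma cvg_det n (A : nat -> 'M[R]_n) (B : 'M[R]_n) :
  (forall i j, (fun k => A k i j) @ \oo --> B i j) ->
  (fun k => \det (A k)) @ \oo --> \det B.
Proof.
move=> h; rewrite /determinant; under eq_cvg do rewrite /determinant.
apply: cvg_sumR => s.
apply: cvgM; first exact: cvg_cst.
by apply: cvg_prodR => i; apply: h.
Qed.

Lemma rcvg_cvg (u : nat -> R) l : rcvg u l -> u @ \oo --> l.
Proof.
move=> h; apply/cvgrPdist_lt => e e0; have [K hK] := h e e0.
by exists K => // k /= Kk; rewrite distrC; apply: hK.
Qed.

Lemma mcvg_entry p q (Z : nat -> 'M[R]_(p, q)) L i j : mcvg Z L ->
  (fun k => Z k i j) @ \oo --> L i j.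
Proof.
move=> h; apply: rcvg_cvg => e e0; have [K hK] := h e e0.
exists K => k Kk; apply: le_lt_trans (hK k Kk).
by have := entry_le_fnorm (Z k - L) i j; rewrite !mxE.
Qed.

Lemma rank_rowsub p q m (f : 'I_m -> 'I_p) (A : 'M[R]_(p, q)) : (\rank (rowsub f A) <= \rank A)%N.
Proof. by rewrite rowsubE mxrankM_maxr. Qed.

Lemma rank_closed p q k : sclosed [set Y : 'M[R]_(p, q) | (\rank Y <= k)%N].
Proof.
move=> Z L /= hZ hL; rewrite leqNgt; apply/negP => hk.
set A1 := rowsub (maxrankfun L) L.
have hfree : row_free A1 := maxrowsub_free L.
have hfull : row_full A1^T by rewrite /row_full mxrank_tr.
set g := fullrankfun hfull.
set T := fun Y : 'M[R]_(p, q) => rowsub g (rowsub (maxrankfun L) Y)^T.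
have TL : T L \in unitmx by rewrite -row_full_unit; exact: fullrowsub_full.
have TZ : forall j, \det (T (Z j)) = 0.
  move=> j; apply/eqP; apply: contraT => hd.
  have : T (Z j) \in unitmx by rewrite unitmxE unitfE.
  rewrite -row_full_unit /row_full => /eqP hr.
  have h2 : (k < \rank (Z j))%N.
    apply: leq_trans hk _; rewrite -{1}hr.
    apply: leq_trans (rank_rowsub _ _) _; rewrite mxrank_tr; exact: rank_rowsub.
  by rewrite ltnNge hZ in h2.
have hc : (fun j => \det (T (Z j))) @ \oo --> \det (T L).
  apply: cvg_det => i j; rewrite /T; under eq_cvg do rewrite !mxE.
  rewrite !mxE; exact: mcvg_entry.
have : \det (T L) = 0.
  have h0 : (fun j => \det (T (Z j))) @ \oo --> (0 : R).
    by under eq_cvg do rewrite TZ; exact: cvg_cst.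
  exact: (cvg_unique _ hc h0).
by move/eqP; apply/negP; rewrite -unitfE -unitmxE.
Qed.

End RankClosed.
Section Closed.
Variable R : realType.

Lemma cl_bound2 m p q (A : 'rV[R]_m -> 'M[R]_(p, q)) : coordlike A ->
  forall y, fnorm (A y) <= (p * q).+1%:R * fnorm y.
Proof.
move=> hA y.
rewrite -(ler_pXn2r (n:=2)) ?nnegrE ?fnorm_ge0 ?mulr_ge0 ?fnorm_ge0 //.
apply: le_trans (cl_bound hA y) _.
rewrite exprMn ler_wpM2r ?sqr_ge0 //.
rewrite -natrX ler_nat; apply: leq_trans (leqnSn _) _.
by rewrite -[X in (X <= _)%N]muln1 leq_mul // expn2 leq_mul.
Qed.

Lemma sclosed_preim m p q (S : set 'M[R]_(p, q)) (A : 'rV[R]_m -> 'M[R]_(p, q)) :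
  coordlike A -> sclosed S -> sclosed [set y | S (A y)].
Proof.
move=> hA hS Z L /= hZ hL; apply: (hS (fun k => A (Z k))) => // e e0.
have e1 : 0 < e / (p * q).+1%:R by rewrite divr_gt0.
have [K hK] := hL _ e1; exists K => k Kk.
rewrite -(clB hA); apply: le_lt_trans (cl_bound2 hA _) _.
by rewrite mulrC -ltr_pdivlMr ?ltr0n //; apply: hK.
Qed.

Lemma sclosed_all m (I : Type) (S : I -> set 'rV[R]_m) :
  (forall i, sclosed (S i)) -> sclosed [set y | forall i, S i y].
Proof. by move=> h Z L /= hZ hL i; apply: (h i Z L) => // k; apply: hZ. Qed.

Lemma sclosedT m : sclosed (setT : set 'rV[R]_m).
Proof. by []. Qed.

Lemma Omega_closed N n r (rs : 'I_N -> nat) v : sclosed (@Omega R N n r rs v).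
Proof.
case: v => /=.
- apply: sclosed_all => i.
  apply: (sclosed_preim (S := [set Y | (\rank Y <= rs i)%N]) (A := Lop_i (rs i) i)).
    exact: cl_Lopi.
  exact: rank_closed.
- apply: (sclosed_preim (S := [set Y | (\rank Y <= r)%N]) (A := @Lop R N n r)).
    exact: cl_Lop.
  exact: rank_closed.
- exact: sclosedT.
Qed.

Lemma prox_reg m (O : set 'rV[R]_m) x z : O z ->
  (forall w, O w -> fnorm (x - z) <= fnorm (x - w)) -> reg_normal O z (x - z).
Proof.
move=> Oz hz; split => // e e0; exists (2 * e); first by rewrite mulr_gt0.
move=> w Ow hw.
have h := hz w Ow.
have : fnorm (x - z) ^+ 2 <= fnorm (x - w) ^+ 2.
  by rewrite ler_pXn2r ?nnegrE ?fnorm_ge0.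
have -> : x - w = (x - z) - (w - z) by rewrite opprB addrA subrK.
rewrite (fnorm_sqB (x - z) (w - z)) => h2.
have h3 : fnorm (w - z) ^+ 2 <= 2 * (e * fnorm (w - z)).
  by rewrite mulrA expr2 ler_wpM2r ?fnorm_ge0 // ltW.
lra.
Qed.

Lemma reg_lim m (O : set 'rV[R]_m) z v : reg_normal O z v -> lim_normal O z v.
Proof.
move=> h; split; first by case: h.
exists (fun=> z), (fun=> v); split; first by case: h.
split; first by move=> e e0; exists 0%N => k _; rewrite subrr fnorm0.
split; first by move=> e e0; exists 0%N => k _; rewrite subrr fnorm0.
by [].
Qed.

Lemma reg_cone m (O : set 'rV[R]_m) z v t : 0 < t -> reg_normal O z v -> reg_normal O z (t *: v).
Proof.
move=> t0 [Oz h]; split => // e e0.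
have [d d0 hd] := h (e / t) (divr_gt0 e0 t0).
exists d => // w Ow hw; rewrite fipZl.
by have := hd w Ow hw; rewrite -(ler_pM2l t0) mulrA mulrCA divff ?gt_eqF // mulr1.
Qed.

Lemma lim_cone m (O : set 'rV[R]_m) z v t : 0 < t -> lim_normal O z v -> lim_normal O z (t *: v).
Proof.
move=> t0 [Oz [xs [vs [h1 [h2 [h3 h4]]]]]]; split => //.
exists xs, (fun k => t *: vs k); do 2 split => //.
split; last by move=> k; apply: reg_cone.
move=> e e0; have [K hK] := h3 (e / t) (divr_gt0 e0 t0).
exists K => k Kk; rewrite -scalerBr fnormZ gtr0_norm //.
by rewrite mulrC -ltr_pdivlMr //; apply: hK.
Qed.

Lemma pproj_ex m (O : set 'rV[R]_m) u x : sclosed O -> O u -> exists z, pseudo_proj O x u z.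
Proof.
move=> hO Ou; have [z [Oz hz]] := nearest x hO Ou.
exists z; split => //; split.
  by apply: reg_lim; apply: prox_reg.
by rewrite fnormB [fnorm (u - x)]fnormB; apply: hz.
Qed.

Lemma rkproj_ex m (c : comp R m) X : exists Y, proj (@rkset R m c) X Y.
Proof.
apply: (nearest (Z0 := 0)); first exact: rank_closed.
by rewrite /rkset /= mxrank0.
Qed.

Lemma xiset_ne m lam (cs : seq (comp R m)) y : exists w, xiset lam cs y w.
Proof.
elim: cs => [|c cs [s hs]] /=; first by exists 0.
have [Y hY] := rkproj_ex (c:=c) (cA c y).
by eexists; exists Y, s; split; [exact: hY | split; [exact: hs | reflexivity]].
Qed.

End Closed.
Section Grad.
Variable R : realType.
Variable m : nat.
Implicit Types (x y z d : 'rV[R]_m).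

Definition Qf (cs : seq (comp R m)) (lam : R) y : R :=
  \sum_(c <- cs) (2 * lam)^-1 * fnorm (cA c y) ^+ 2.
Definition Gf (cs : seq (comp R m)) (lam : R) y : 'rV[R]_m :=
  \sum_(c <- cs) lam^-1 *: adj (cA c) (cA c y).

Lemma fip_suml (cs : seq (comp R m)) (F : comp R m -> 'rV[R]_m) d :
  fip (\sum_(c <- cs) F c) d = \sum_(c <- cs) fip (F c) d.
Proof.
elim: cs => [|c cs IH]; first by rewrite !big_nil fip0l.
by rewrite !big_cons fipDl IH.
Qed.

Lemma Q_exact cs lam y z : allcl cs -> lam != 0 ->
  Qf cs lam z - Qf cs lam y - fip (Gf cs lam y) (z - y) = Qf cs lam (z - y).
Proof.
move=> hcs hl; rewrite /Qf /Gf fip_suml -!sumrB.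
elim: cs hcs => [|c cs IH] /= => [_|[hc hcs]]; first by rewrite !big_nil.
rewrite !big_cons -IH //; congr (_ + _).
rewrite fipZl adjE // (clB hc) (fnorm_sqB (cA c z) (cA c y)) fipBr !fnorm_sq (fipC (cA c z)).
rewrite invfM.
by field; rewrite hl.
Qed.

Lemma Q_ge0 cs lam y : 0 <= lam -> 0 <= Qf cs lam y.
Proof.
move=> l0; apply: sumr_ge0 => c _; apply: mulr_ge0; last exact: sqr_ge0.
by rewrite invr_ge0 mulr_ge0.
Qed.

Lemma Q_bound cs lam : allcl cs -> 0 <= lam ->
  exists K, 0 <= K /\ forall d, Qf cs lam d <= K * fnorm d ^+ 2.
Proof.
move=> hcs l0; rewrite /Qf.
elim: cs hcs => [|c cs IH] /= => [_|[hc hcs]].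
  by exists 0; split => // d; rewrite big_nil mul0r.
have [K [K0 hK]] := IH hcs.
have il0 : 0 <= (2 * lam)^-1 by rewrite invr_ge0 mulr_ge0.
exists ((2 * lam)^-1 * (cp c * cq c)%:R + K); split.
  by rewrite addr_ge0 // mulr_ge0.
move=> d; rewrite big_cons (mulrDl _ K) -mulrA; apply: lerD; last exact: hK.
by rewrite ler_wpM2l //; apply: cl_bound.
Qed.

Lemma grad_unique (f : 'rV[R]_m -> R) g1 g2 : is_gradient f g1 -> is_gradient f g2 -> forall x, g1 x = g2 x.
Proof.
move=> h1 h2 x; apply/eqP; rewrite -subr_eq0; apply/eqP.
set v := g1 x - g2 x.
suff : fip v v = 0 by move/fip_eq0.
suff : fnorm v <= 0.
  move=> hv; have : fnorm v = 0 by apply/eqP; rewrite eq_le hv fnorm_ge0.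
  by rewrite -fnorm_sq => ->; rewrite expr0n.
apply/ler_addgt0Pr => e e0; rewrite add0r.
have e2 : 0 < e / 2 by rewrite divr_gt0.
have [d1 d10 hd1] := h1 x _ e2.
have [d2 d20 hd2] := h2 x _ e2.
have [v0|vn0] := eqVneq (fnorm v) 0; first by rewrite v0 ltW.
have vp : 0 < fnorm v by rewrite lt_def vn0 fnorm_ge0.
set t := Num.min d1 d2 / (2 * fnorm v).
have t0 : 0 < t by rewrite divr_gt0 ?lt_min ?d10 ?d20 // mulr_gt0.
set z := x + t *: v.
have hz : fnorm (z - x) = t * fnorm v by rewrite /z addrC addKr fnormZ gtr0_norm.
have hzd : fnorm (z - x) < Num.min d1 d2.
  have mpos : 0 < Num.min d1 d2 by rewrite lt_min d10 d20.
  rewrite hz; have -> : t * fnorm v = Num.min d1 d2 / 2 by rewrite /t; field; rewrite gt_eqF.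
  by rewrite ltr_pdivrMr // ltr_pMr // ltr1n.
have := hd1 z; have := hd2 z.
rewrite lt_min in hzd; case/andP: hzd => hz1 hz2.
move=> /(_ hz2) a2 /(_ hz1) a1.
have : fip v (z - x) <= e * fnorm (z - x).
  have -> : fip v (z - x) = (f z - f x - fip (g2 x) (z - x)) - (f z - f x - fip (g1 x) (z - x)).
    by rewrite /v fipBl; ring.
  apply: le_trans (ler_norm _) _; apply: le_trans (ler_normB _ _) _.
  by rewrite [e]splitr mulrDl; apply: lerD.
have zx : z - x = t *: v by rewrite /z addrC addKr.
rewrite zx fipZr fnormZ gtr0_norm // -fnorm_sq expr2 => h.
rewrite -(ler_pM2r (mulr_gt0 t0 vp)).
by have -> : fnorm v * (t * fnorm v) = t * (fnorm v * fnorm v) by ring.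
Qed.

End Grad.
Section Grad2.
Variable R : realType.
Variable m : nat.

Lemma grad_h (f : 'rV[R]_m -> R) gf cs lam : is_gradient f gf -> allcl cs -> 0 < lam ->
  is_gradient (hfun f cs lam) (fun y => gf y + Gf cs lam y).
Proof.
move=> hf hcs l0 x e e0.
have [K [K0 hK]] := Q_bound hcs (ltW l0).
have e2 : 0 < e / 2 by rewrite divr_gt0.
have [df df0 hdf] := hf x _ e2.
have K1 : 0 < K + 1 by rewrite ltr_wpDl.
have dq0 : 0 < e / (2 * (K + 1)) by rewrite divr_gt0 // mulr_gt0.
exists (Num.min df (e / (2 * (K + 1)))); first by rewrite lt_min df0 dq0.
move=> z; rewrite lt_min => /andP [hz1 hz2].
have -> : hfun f cs lam z - hfun f cs lam x - fip (gf x + Gf cs lam x) (z - x) =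
   (f z - f x - fip (gf x) (z - x)) + (Qf cs lam z - Qf cs lam x - fip (Gf cs lam x) (z - x)).
  by rewrite /hfun -/(Qf cs lam z) -/(Qf cs lam x) fipDl; ring.
rewrite Q_exact ?gt_eqF //.
apply: le_trans (ler_normD _ _) _.
rewrite [e]splitr mulrDl; apply: lerD; first exact: hdf.
rewrite ger0_norm; last exact: Q_ge0 _ _ (ltW l0).
apply: le_trans (hK _) _.
have hd := fnorm_ge0 (z - x).
rewrite expr2 mulrA ler_wpM2r //.
apply: le_trans (_ : K * (e / (2 * (K + 1))) <= _).
  by rewrite ler_wpM2l // ltW.
rewrite mulrA ler_pdivrMr ?mulr_gt0 //.
have -> : e / 2 * (2 * (K + 1)) = e * (K + 1) by field.
rewrite [K * e]mulrC ler_wpM2l ?lerDl ?ler01 //; exact: ltW.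
Qed.

Lemma gh_eq (f : 'rV[R]_m -> R) gf gh cs lam : is_gradient f gf -> allcl cs -> 0 < lam ->
  is_gradient (hfun f cs lam) gh -> forall y, gh y = gf y + Gf cs lam y.
Proof.
move=> hf hcs l0 hh y; exact: (grad_unique hh (grad_h hf hcs l0) y).
Qed.

Lemma mono1d (psi : R -> R) :
  (forall t, 0 <= t <= 1 -> forall e, 0 < e -> exists2 d, 0 < d & forall s, 0 <= s <= 1 ->
     `|s - t| < d -> (t < s -> psi s <= psi t + e * (s - t)) /\ (s < t -> psi t <= psi s + e * (t - s))) ->
  psi 1 <= psi 0.
Proof.
move=> h; apply/ler_addgt0Pr => e e0.
set S := [set t : R | 0 <= t <= 1 /\ psi t <= psi 0 + e * t].
have S0 : S 0 by split; rewrite ?lexx ?ler01 // mulr0 addr0.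
have hub : ubound S 1 by move=> t [/andP [_ ?] _].
have hs : has_sup S by split; [exists 0 | exists 1].
set T := sup S.
have T0 : 0 <= T by apply: sup_upper_bound.
have T1 : T <= 1 by apply: sup_le_ub => //; exists 0.
have T01 : 0 <= T <= 1 by rewrite T0 T1.
have [d d0 hd] := h T T01 e e0.
have ST : S T.
  have [s Ss hs'] := sup_adherent d0 hs.
  have sT : s <= T by apply: sup_upper_bound.
  have [sT'|sT'] := eqVneq s T; first by rewrite -sT'.
  have slt : s < T by rewrite lt_def eq_sym sT' sT.
  case: Ss => s01 hps.
  have hsT : `|s - T| < d by rewrite distrC ger0_norm ?subr_ge0 // ltrBlDr -ltrBlDl.
  have [_ h2] := hd s s01 hsT.
  split => //; apply: le_trans (h2 slt) _.
  have -> : psi 0 + e * T = (psi 0 + e * s) + e * (T - s) by ring.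
  by rewrite lerD2r.
have T1' : T = 1.
  apply/eqP; rewrite eq_le T1 /=; rewrite leNgt; apply/negP => Tlt.
  set s := Num.min 1 (T + d / 2).
  have d2 : 0 < d / 2 by rewrite divr_gt0.
  have Ts : T < s by rewrite lt_min Tlt ltrDl d2.
  have s1 : s <= 1 by rewrite ge_min lexx.
  have s01 : 0 <= s <= 1 by rewrite s1 andbT (le_trans T0 (ltW Ts)).
  have hsT : `|s - T| < d.
    rewrite gtr0_norm ?subr_gt0 // ltrBlDl.
    apply: (@le_lt_trans _ _ (T + d / 2)); first by rewrite /s ge_min lexx orbT.
    rewrite ltrD2l; by rewrite ltr_pdivrMr // ltr_pMr // ltr1n.
  have [h1 _] := hd s s01 hsT.
  have Ss : S s.
    split => //; apply: le_trans (h1 Ts) _; case: ST => _ hT.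
    have -> : psi 0 + e * s = (psi 0 + e * T) + e * (s - T) by ring.
    by rewrite lerD2r.
  have := sup_upper_bound hs Ss; rewrite -/T => hsT'.
  by have := lt_le_trans Ts hsT'; rewrite ltxx.
by case: ST; rewrite T1' mulr1.
Qed.

End Grad2.
Section Descent.
Variable R : realType.
Variable m : nat.

Lemma descent (f : 'rV[R]_m -> R) gf Lg : is_gradient f gf ->
  (forall x z, fnorm (gf x - gf z) <= Lg * fnorm (x - z)) -> 0 <= Lg ->
  forall y d, f (y + d) <= f y + fip (gf y) d + Lg * fnorm d ^+ 2.
Proof.
move=> hf hL L0 y d.
set nd := fnorm d.
have nd0 : 0 <= nd := fnorm_ge0 d.
set b := fip (gf y) d.
pose psi t := f (y + t *: d) - t * b - Lg * nd ^+ 2 * t ^+ 2.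
suff : psi 1 <= psi 0.
  by rewrite /psi !scale1r scale0r addr0 expr1n mul1r mulr1 mul0r expr0n /= mulr0 !subr0; lra.
apply: mono1d => t /andP [t0 t1] e e0.
have nd1 : 0 < nd + 1 by rewrite ltr_wpDl.
have e1 : 0 < e / (nd + 1) by rewrite divr_gt0.
have [df df0 hdf] := hf (y + t *: d) _ e1.
exists (df / (nd + 1)); first by rewrite divr_gt0.
move=> s /andP [s0 s1] hst.
set a := fip (gf (y + t *: d)) d.
set F := f (y + s *: d) - f (y + t *: d) - (s - t) * a.
have zx : (y + s *: d) - (y + t *: d) = (s - t) *: d.
  by rewrite scalerBl opprD addrACA subrr add0r.
have hF : `|F| <= e * `|s - t|.
  have hz : fnorm ((y + s *: d) - (y + t *: d)) < df.
    rewrite zx fnormZ; apply: le_lt_trans (_ : `|s - t| * (nd + 1) < df).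
      by rewrite ler_wpM2l // lerDl.
    by rewrite -ltr_pdivlMr.
  have := hdf _ hz; rewrite zx fipZr -/a fnormZ -/F => h.
  apply: le_trans h _.
  have -> : e / (nd + 1) * (`|s - t| * nd) = (e * `|s - t|) * (nd / (nd + 1)) by ring.
  by rewrite ler_piMr ?mulr_ge0 ?(ltW e0) // ler_pdivrMr // mul1r lerDl.
have hP : `|a - b| <= Lg * t * nd ^+ 2.
  rewrite /a /b -fipBl; apply: le_trans (CSabs _ _) _.
  rewrite expr2 mulrA ler_wpM2r //.
  apply: le_trans (hL _ _) _.
  by rewrite [y + _]addrC addrK fnormZ ger0_norm // mulrA.
have hP1 : a - b <= Lg * t * nd ^+ 2 := le_trans (ler_norm _) hP.
have hA : 0 <= Lg * nd ^+ 2 by rewrite mulr_ge0 // sqr_ge0.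
have eq1 : psi s - psi t = F + (s - t) * (a - b) - Lg * nd ^+ 2 * ((s - t) * (s + t)).
  by rewrite /psi /F; ring.
split => hts.
- have u0 : 0 <= s - t by rewrite subr_ge0 ltW.
  have h1 : F <= e * (s - t) by apply: le_trans (ler_norm _) _; rewrite -[s - t]ger0_norm.
  have h2 : (s - t) * (a - b) <= (s - t) * (Lg * t * nd ^+ 2) by apply: (ler_wpM2l u0).
  have h3 : (s - t) * (Lg * t * nd ^+ 2) <= Lg * nd ^+ 2 * ((s - t) * (s + t)).
    have -> : (s - t) * (Lg * t * nd ^+ 2) = Lg * nd ^+ 2 * ((s - t) * t) by ring.
    by apply: (ler_wpM2l hA); apply: (ler_wpM2l u0); rewrite lerDr.
  have : psi s - psi t <= e * (s - t) by rewrite eq1; lra.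
  lra.
- have u0 : 0 <= t - s by rewrite subr_ge0 ltW.
  have h1' : - F <= e * (t - s).
    have hF' : `|F| <= e * (t - s).
      by move: hF; rewrite (distrC s t) (ger0_norm u0).
    by apply: le_trans hF'; rewrite -normrN; exact: ler_norm.
  have h2 : (t - s) * (a - b) <= (t - s) * (Lg * t * nd ^+ 2) by apply: (ler_wpM2l u0).
  have h3 : (t - s) * (Lg * t * nd ^+ 2) <= Lg * nd ^+ 2 * ((t - s) * (s + t)).
    have -> : (t - s) * (Lg * t * nd ^+ 2) = Lg * nd ^+ 2 * ((t - s) * t) by ring.
    by apply: (ler_wpM2l hA); apply: (ler_wpM2l u0); rewrite lerDr.
  have eq2 : psi t - psi s = - F + (t - s) * (a - b) - Lg * nd ^+ 2 * ((t - s) * (s + t)).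
    by rewrite /psi /F; ring.
  have : psi t - psi s <= e * (t - s) by rewrite eq2; lra.
  lra.
Qed.

End Descent.
Section MaxLemmas.

Lemma bigmax_ub d (T : orderType d) (x0 : T) (r : seq nat) (G : nat -> T) j :
  j \in r -> (G j <= \big[Order.max/x0]_(i <- r) G i)%O.
Proof.
elim: r => [|a r IH] //; rewrite inE big_cons le_max => /orP [/eqP ->|h].
  by rewrite lexx.
by rewrite IH ?orbT.
Qed.

Lemma bigmax_le d (T : orderType d) (x0 : T) (r : seq nat) (G : nat -> T) B :
  (x0 <= B)%O -> (forall j, j \in r -> (G j <= B)%O) -> (\big[Order.max/x0]_(i <- r) G i <= B)%O.
Proof.
move=> h0; elim: r => [|a r IH] h; first by rewrite big_nil.
rewrite big_cons ge_max h ?inE ?eqxx //= IH // => j hj.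
by apply: h; rewrite inE hj orbT.
Qed.

Variable R : realType.

Lemma bigmaxe_EFin (r : seq nat) (g : nat -> R) : r != [::] -> (forall j, j \in r -> 0 <= g j) ->
  \big[maxe/-oo%E]_(i <- r) (g i)%:E = (\big[Num.max/0]_(i <- r) g i)%:E.
Proof.
elim: r => [|a r IH] // _ h.
rewrite !big_cons.
have [->|rn] := eqVneq r [::].
  by rewrite !big_nil maxeNy max_l // h // mem_head.
rewrite IH // ?EFin_max // => j hj; apply: h; by rewrite inE hj orbT.
Qed.

End MaxLemmas.
Section DistLemmas.
Variable R : realType.
Variables p q : nat.
Implicit Types (X Y Z : 'M[R]_(p, q)) (C : set 'M[R]_(p, q)).

Lemma dist_le C X Z : C Z -> dist X C <= fnorm (X - Z).
Proof.
move=> CZ; apply: ge_inf; last by exists Z.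
by exists 0 => _ [W _ <-]; exact: fnorm_ge0.
Qed.

Lemma dist_ge0 C X Z : C Z -> 0 <= dist X C.
Proof.
move=> CZ; apply: lb_le_inf; first by exists (fnorm (X - Z)); exists Z.
by move=> _ [W _ <-]; exact: fnorm_ge0.
Qed.

Lemma dist_proj C X Y : proj C X Y -> dist X C = fnorm (X - Y).
Proof.
move=> [CY hY]; apply/eqP; rewrite eq_le dist_le //=.
apply: lb_le_inf; first by exists (fnorm (X - Y)); exists Y.
by move=> _ [W CW <-]; apply: hY.
Qed.

End DistLemmas.

Section Algo.
Variable R : realType.
Variable m : nat.
Variables (O : set 'rV[R]_m) (cs : seq (comp R m)) (f : 'rV[R]_m -> R)
  (gf gh : 'rV[R]_m -> 'rV[R]_m) (lam Lg c : R).
Hypothesis hcs : allcl cs.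
Hypothesis hf : is_gradient f gf.
Hypothesis hL : forall x z, fnorm (gf x - gf z) <= Lg * fnorm (x - z).
Hypothesis Lg0 : 0 <= Lg.
Hypothesis l0 : 0 < lam.
Hypothesis hgh : forall y, gh y = gf y + Gf cs lam y.
Hypothesis f0 : forall y, 0 <= f y.
Hypothesis c0 : 0 < c.

Definition Dsum (cs' : seq (comp R m)) (y : 'rV[R]_m) :=
  \sum_(c0 <- cs') (2 * lam)^-1 * dist (cA c0 y) (@rkset R m c0) ^+ 2.
Definition Fr y := f y + Dsum cs y.
Definition KQ (cs' : seq (comp R m)) := \sum_(c0 <- cs') (2 * lam)^-1 * (cp c0 * cq c0)%:R.

Lemma Flam_in y : O y -> Flam f O cs lam y = (Fr y)%:E.
Proof.
move=> Oy; rewrite /Flam /indicator mem_set // adde0 -EFinD.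
by [].
Qed.

Lemma il0 : 0 <= (2 * lam)^-1.
Proof. by rewrite invr_ge0 mulr_ge0 // ltW. Qed.

Lemma Dsum_ge0 cs' y : 0 <= Dsum cs' y.
Proof. by apply: sumr_ge0 => c1 _; rewrite mulr_ge0 ?il0 ?sqr_ge0. Qed.

Lemma Fr_ge0 y : 0 <= Fr y.
Proof. by rewrite addr_ge0 ?Dsum_ge0. Qed.

Lemma KQ_bound cs' : allcl cs' -> 0 <= KQ cs' /\ forall d, Qf cs' lam d <= KQ cs' * fnorm d ^+ 2.
Proof.
rewrite /KQ /Qf; elim: cs' => [|c1 cs' IH] /= => [_|[hc hcs']].
  by split => [|d]; rewrite !big_nil ?mul0r.
have [K0 hK] := IH hcs'.
split; first by rewrite big_cons addr_ge0 // mulr_ge0 ?il0.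
move=> d; rewrite !big_cons (mulrDl _ (\sum_(j <- cs') _)) -mulrA; apply: lerD; last exact: hK.
by rewrite ler_wpM2l ?il0 //; apply: cl_bound.
Qed.

Lemma xi_dist cs' y w u : allcl cs' -> xiset lam cs' y w ->
  Dsum cs' u <= Dsum cs' y + Qf cs' lam u - Qf cs' lam y - fip w (u - y).
Proof.
rewrite /Dsum /Qf.
elim: cs' w => [|c1 cs' IH] w /= => [_ ->|[hc hcs'] [Y [s [hY [hs ->]]]]].
  by rewrite !big_nil fip0l !subr0 addr0.
rewrite !big_cons fipDl fipZl adjE //.
have h1 := IH s hcs' hs.
have hd1 : dist (cA c1 u) (@rkset R m c1) ^+ 2 <= fnorm (cA c1 u - Y) ^+ 2.
  rewrite ler_pXn2r ?nnegrE ?fnorm_ge0 //; last exact: (dist_ge0 _ hY.1).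
  exact: dist_le hY.1.
have hd2 : dist (cA c1 y) (@rkset R m c1) = fnorm (cA c1 y - Y) by apply: dist_proj.
rewrite hd2.
have hexp : (2 * lam)^-1 * fnorm (cA c1 u - Y) ^+ 2 =
   (2 * lam)^-1 * fnorm (cA c1 y - Y) ^+ 2 + (2 * lam)^-1 * fnorm (cA c1 u) ^+ 2
   - (2 * lam)^-1 * fnorm (cA c1 y) ^+ 2 - lam^-1 * fip Y (cA c1 (u - y)).
  rewrite (clB hc) !fnorm_sqB fipBr !(fipC Y) invfM.
  by field; rewrite gt_eqF.
have := ler_wpM2l il0 hd1.
set D1 := \sum_(j <- cs') _ ; set D2 := \sum_(j <- cs') _.
move: h1; rewrite -/D1 -/D2 => h1 h2.
rewrite hexp in h2.
set Qs1 := \sum_(j <- cs') _ in h1 *.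
lra.
Qed.

Lemma xi_res (cs' : seq (comp R m)) y w : allcl cs' -> xiset lam cs' y w -> resset lam cs' y (Gf cs' lam y - w).
Proof.
rewrite /Gf; elim: cs' w => [|c1 cs' IH] w /= => [_ ->|[hc hcs'] [Y [s [hY [hs ->]]]]].
  by rewrite big_nil subr0.
exists Y, (Gf cs' lam y - s); split => //; split; first exact: IH.
by rewrite big_cons adjB scalerBr opprD addrACA.
Qed.

Lemma key_descent y xi L u : O y -> xiset lam cs y xi -> 0 < L ->
  pseudo_proj O (y - L^-1 *: (gh y - xi)) y u ->
  Fr u <= Fr y - (L / 2 - Lg - KQ cs) * fnorm (u - y) ^+ 2.
Proof.
move=> Oy hxi L0 [Ou [_ hpp]].
set d := u - y; set g := gh y - xi.
have e1 : u - (y - L^-1 *: g) = d + L^-1 *: g by rewrite opprB addrA addrAC.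
have e2 : y - (y - L^-1 *: g) = L^-1 *: g by rewrite opprB addrA addrAC subrr add0r.
rewrite e1 e2 in hpp.
have hsq : fnorm (d + L^-1 *: g) ^+ 2 <= fnorm (L^-1 *: g) ^+ 2.
  by rewrite ler_pXn2r ?nnegrE ?fnorm_ge0.
rewrite fnorm_sqD fipZr in hsq.
have hsq2 : fnorm d ^+ 2 + 2 * (L^-1 * fip d g) <= 0 by lra.
have hg : L / 2 * fnorm d ^+ 2 + fip d g <= 0.
  have := ler_wpM2l (ltW (divr_gt0 L0 (ltr0n _ 2))) hsq2.
  have -> : L / 2 * (fnorm d ^+ 2 + 2 * (L^-1 * fip d g)) = L / 2 * fnorm d ^+ 2 + fip d g.
    by field; rewrite gt_eqF.
  by rewrite mulr0.
have hdesc := descent hf hL Lg0 y d.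
rewrite /d addrC subrK -/d in hdesc.
have hQ := Q_exact y u hcs (lt0r_neq0 l0).
have [_ hK] := KQ_bound hcs.
have hKd := hK d.
rewrite -/d in hQ.
have hx := xi_dist u hcs hxi.
rewrite -/d in hx.
have hgd : fip d g = fip (gf y) d + fip (Gf cs lam y) d - fip xi d.
  by rewrite fipC /g hgh fipBl fipDl.
rewrite /Fr.
lra.
Qed.

End Algo.
Section Run.
Variable R : realType.
Variable m : nat.
Variables (O : set 'rV[R]_m) (cs : seq (comp R m)) (f : 'rV[R]_m -> R)
  (gf gh : 'rV[R]_m -> 'rV[R]_m) (lam Lg c : R) (M : nat).
Hypothesis hcs : allcl cs.
Hypothesis hf : is_gradient f gf.
Hypothesis hL : forall x z, fnorm (gf x - gf z) <= Lg * fnorm (x - z).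
Hypothesis Lg0 : 0 <= Lg.
Hypothesis l0 : 0 < lam.
Hypothesis hgh : forall y, gh y = gf y + Gf cs lam y.
Hypothesis f0 : forall y, 0 <= f y.
Hypothesis c0 : 0 < c.

Local Notation F := (Flam f O cs lam).
Local Notation Frr := (Fr cs f lam).
Definition Lthr := 2 * (Lg + KQ lam cs) + c.

Lemma Lthr_gt0 : 0 < Lthr.
Proof.
have [K0 _] := KQ_bound l0 hcs.
by rewrite /Lthr ltr_wpDl // mulr_ge0 // addr_ge0.
Qed.

Definition mr (y : nat -> 'rV[R]_m) (l : nat) :=
  \big[Num.max/0]_(j <- index_iota (l - M) l.+1) Frr (y j).

Lemma in_range l j : (j \in index_iota (l - M) l.+1) = (l - M <= j <= l)%N.
Proof. by rewrite mem_index_iota ltnS. Qed.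

Lemma maxF_mr y l : (forall j, (j <= l)%N -> O (y j)) -> maxF F M y l = (mr y l)%:E.
Proof.
move=> hO; rewrite /maxF /mr.
rewrite (eq_big_seq (fun j => (Frr (y j))%:E)); last first.
  by move=> j; rewrite in_range => /andP [_ hj]; apply: Flam_in; apply: hO.
apply: bigmaxe_EFin; last by move=> j _; exact: (Fr_ge0 cs l0 f0 (y j)).
apply/eqP => h; have : l \in index_iota (l - M) l.+1 by rewrite in_range leq_subr leqnn.
by rewrite h.
Qed.

Lemma mr_ub y l j : (l - M <= j <= l)%N -> Frr (y j) <= mr y l.
Proof. by move=> h; apply: bigmax_ub; rewrite in_range. Qed.

Lemma mr_le y l B : 0 <= B -> (forall j, (l - M <= j <= l)%N -> Frr (y j) <= B) -> mr y l <= B.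
Proof. by move=> B0 h; apply: bigmax_le => // j; rewrite in_range; apply: h. Qed.

Lemma mr_ge0 y l : 0 <= mr y l.
Proof. apply: le_trans (Fr_ge0 cs l0 f0 (y l)) (mr_ub _ _); by rewrite leq_subr leqnn. Qed.

Lemma mr0 y : mr y 0 = Frr (y 0%N).
Proof.
rewrite /mr sub0n /index_iota subn0 /= big_cons big_nil max_l //; exact: (Fr_ge0 cs l0 f0 (y 0%N)).
Qed.

Lemma ls_good y l xi L0 tau i u : (forall j, (j <= l)%N -> O (y j)) -> xiset lam cs (y l) xi ->
  0 < L0 * tau ^+ i -> Lthr <= L0 * tau ^+ i ->
  pseudo_proj O (trial gh (y l) xi L0 tau i) (y l) u -> ls_ok F M c y l u.
Proof.
move=> hO hxi Lp Lge hpp.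
have Ou : O u by case: hpp.
have hk := key_descent hcs hf hL Lg0 l0 hgh (hO l (leqnn l)) hxi Lp hpp.
rewrite /ls_ok maxF_mr // Flam_in //.
have hub := mr_ub y (l := l) (j := l); rewrite leq_subr leqnn in hub.
have hub' := hub isT.
rewrite -EFinB lee_fin.
have hq := sqr_ge0 (fnorm (u - y l)).
have : c / 2 * fnorm (u - y l) ^+ 2 <= (L0 * tau ^+ i / 2 - Lg - KQ lam cs) * fnorm (u - y l) ^+ 2.
  apply: ler_wpM2r => //; rewrite /Lthr in Lge; lra.
lra.
Qed.

Variables (tau Lmin Lmax : R).
Hypothesis Lmin0 : 0 < Lmin.
Hypothesis tau1 : 1 < tau.
Local Notation Xi := (xiset lam cs).
Local Notation step := (alg_step O Xi gh F M c Lmin Lmax tau).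

Lemma tau0 : 0 < tau.
Proof. exact: lt_trans ltr01 tau1. Qed.

Lemma step_O y l Lb : step y l Lb -> O (y l.+1).
Proof.
move=> [xi [_ [L0 [_ [i [u [hpp [_ [_ [_ ->]]]]]]]]]].
by have [] := hpp i (leqnn i).
Qed.

Lemma allO_upto y0 y l : y 0%N = y0 -> O y0 -> (forall j, (j < l)%N -> exists Lb, step y j Lb) ->
  forall j, (j <= l)%N -> O (y j).
Proof.
move=> hy0 Oy0 hs; elim => [|j IH] hj; first by rewrite hy0.
have [Lb hLb] := hs j hj; exact: step_O hLb.
Qed.

Lemma Lb_bound y l Lb : (forall j, (j <= l)%N -> O (y j)) -> step y l Lb ->
  0 < Lb /\ Lb <= Lmax + tau * Lthr.
Proof.
move=> hO [xi [hxi [L0 [/andP [hL1 hL2] [i [u [hpp [hfail [_ [-> _]]]]]]]]]].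
have L00 : 0 < L0 by apply: lt_le_trans Lmin0 hL1.
have hLt := Lthr_gt0.
split; first by rewrite mulr_gt0 // exprn_gt0 // tau0.
case: i hpp hfail => [|i] hpp hfail.
  rewrite expr0 mulr1; apply: le_trans hL2 _; rewrite lerDl mulr_ge0 // ltW //; exact: tau0.
have hlt : L0 * tau ^+ i < Lthr.
  rewrite ltNge; apply/negP => hge; apply: (hfail i (ltnSn i)).
  apply: (ls_good (xi := xi) (L0 := L0) (tau := tau) (i := i)) => //.
    by rewrite mulr_gt0 // exprn_gt0 // tau0.
  by apply: hpp; exact: leqnSn.
rewrite exprSr mulrA; apply: le_trans (_ : tau * Lthr <= _); last by rewrite lerDr ltW // (lt_le_trans Lmin0 (le_trans hL1 hL2)).
by rewrite mulrC ler_wpM2l ?ltW // tau0.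
Qed.

Lemma bern i : 1 + i%:R * (tau - 1) <= tau ^+ i.
Proof.
elim: i => [|i IH]; first by rewrite mul0r addr0 expr0.
rewrite exprSr -[i.+1]addn1 natrD mulrDl mul1r.
have t1 : 0 <= tau - 1 by rewrite subr_ge0 ltW.
have h : (1 + i%:R * (tau - 1)) * tau <= tau ^+ i * tau by rewrite ler_wpM2r // ltW // tau0.
apply: le_trans h.
have hi : 0 <= i%:R * (tau - 1) * (tau - 1) by rewrite mulr_ge0 // mulr_ge0.
have -> : (1 + i%:R * (tau - 1)) * tau = 1 + (i%:R * (tau - 1) + (tau - 1)) + i%:R * (tau - 1) * (tau - 1) by ring.
by rewrite lerDl.
Qed.

Lemma ex_big L0 : 0 < L0 -> exists i, Lthr <= L0 * tau ^+ i.
Proof.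
move=> L00.
have t1 : 0 < tau - 1 by rewrite subr_gt0.
set i := Num.Def.archi_bound (Lthr / (L0 * (tau - 1))).
have hi : Lthr / (L0 * (tau - 1)) < i%:R.
  by apply: archi_boundP; rewrite divr_ge0 ?mulr_ge0 ?ltW ?Lthr_gt0.
exists i; apply: (@le_trans _ _ (L0 * (1 + i%:R * (tau - 1)))); last by apply: (ler_wpM2l (ltW L00)); exact: bern.
rewrite ltr_pdivrMr ?mulr_gt0 // in hi.
rewrite mulrDr mulr1; apply: le_trans (ltW hi) _.
have -> : i%:R * (L0 * (tau - 1)) = L0 * (i%:R * (tau - 1)) by ring.
by rewrite lerDr ltW.
Qed.

Lemma part_i y0 : sclosed O -> O y0 -> forall l y, y 0%N = y0 ->
  (forall j, (j < l)%N -> exists Lb, step y j Lb) ->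
  (exists xi, Xi (y l) xi) /\
  forall xi, Xi (y l) xi -> forall L0, Lmin <= L0 <= Lmax ->
    (forall j, exists u, pseudo_proj O (trial gh (y l) xi L0 tau j) (y l) u) /\
    forall u : nat -> 'rV[R]_m,
      (forall j, pseudo_proj O (trial gh (y l) xi L0 tau j) (y l) (u j)) ->
      exists i, ls_ok F M c y l (u i).
Proof.
move=> hO Oy0 l y hy0 hs.
have hOl := allO_upto hy0 Oy0 hs.
split; first exact: xiset_ne.
move=> xi hxi L0 /andP [hL1 _].
have L00 : 0 < L0 by apply: lt_le_trans Lmin0 hL1.
split; first by move=> j; apply: pproj_ex => //; apply: hOl.
move=> u hu.
have [i hi] := ex_big L00.
exists i; apply: (ls_good (xi := xi) (L0 := L0) (tau := tau) (i := i)) => //.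
by rewrite mulr_gt0 // exprn_gt0 // tau0.
Qed.

Section WholeRun.
Variables (y0 : 'rV[R]_m) (y : nat -> 'rV[R]_m) (Lb : nat -> R).
Hypothesis hy0 : y 0%N = y0.
Hypothesis Oy0 : O y0.
Hypothesis hstep : forall l, step y l (Lb l).

Lemma allO l : O (y l).
Proof.
apply: (allO_upto hy0 Oy0 (l := l)) => // j _; exists (Lb j); exact: hstep.
Qed.

Lemma desc l : Frr (y l.+1) <= mr y l - c / 2 * fnorm (y l.+1 - y l) ^+ 2.
Proof.
have [xi [_ [L0 [_ [i [u [hpp [_ [hok [_ hy]]]]]]]]]] := hstep l.
move: hok; rewrite /ls_ok -hy maxF_mr; last by move=> j _; exact: allO.
rewrite Flam_in; last exact: allO.
by rewrite -EFinB lee_fin.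
Qed.

Lemma mr_mono l : mr y l.+1 <= mr y l.
Proof.
apply: mr_le; first exact: mr_ge0.
move=> j /andP [h1 h2].
have [->|hj] := eqVneq j l.+1.
  apply: le_trans (desc l) _; rewrite lerBlDr lerDl mulr_ge0 ?sqr_ge0 //.
  by rewrite divr_ge0 // ltW.
apply: mr_ub; apply/andP; split; last by rewrite -ltnS ltn_neqAle hj h2.
by apply: leq_trans h1; rewrite leq_sub2r.
Qed.

Lemma mr_anti l k : mr y (l + k) <= mr y l.
Proof.
elim: k => [|k IH]; first by rewrite addn0.
by rewrite addnS; apply: le_trans (mr_mono _) IH.
Qed.

Lemma F_le l : Frr (y l) <= Frr (y 0%N).
Proof.
rewrite -mr0; apply: le_trans (mr_ub (l := l) _ _) _; first by rewrite leq_subr leqnn.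
by have := mr_anti 0 l; rewrite add0n.
Qed.

Lemma small_step eps : 0 < eps -> exists l, fnorm (y l.+1 - y l) <= eps.
Proof.
move=> e0; apply: contrapT => hn.
have hall : forall l, eps < fnorm (y l.+1 - y l).
  by move=> l; rewrite ltNge; apply/negP => h; apply: hn; exists l.
set dl := c / 2 * eps ^+ 2.
have dl0 : 0 < dl by rewrite mulr_gt0 ?divr_gt0 // exprn_gt0.
have desc' : forall l, Frr (y l.+1) <= mr y l - dl.
  move=> l; apply: le_trans (desc l) _; rewrite lerD2l lerN2.
  apply: ler_wpM2l; first by rewrite divr_ge0 // ltW.
  rewrite ler_pXn2r ?nnegrE ?fnorm_ge0 //; [exact: ltW (hall l) | exact: ltW e0].
have block : forall l, mr y (l + M.+1) <= mr y l - dl.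
  move=> l; apply: mr_le.
    have := desc' l; have := Fr_ge0 cs l0 f0 (y l.+1); lra.
  move=> j /andP [h1 h2].
  have hj : (l < j)%N by move: h1; rewrite addnS subSn ?leq_addl // -addnBA // subnn addn0.
  case: j h1 h2 hj => [|j] // h1 h2 hj.
  apply: le_trans (desc' j) _; rewrite lerD2r.
  have -> : j = (l + (j - l))%N by rewrite subnKC.
  exact: mr_anti.
have iter : forall k, mr y (k * M.+1) <= mr y 0%N - k%:R * dl.
  elim => [|k IH]; first by rewrite mul0n mul0r subr0.
  rewrite mulSn addnC; apply: le_trans (block _) _.
  rewrite -[k.+1]addn1 natrD mulrDl mul1r opprD addrA lerD2r; exact: IH.
set k := Num.Def.archi_bound (mr y 0%N / dl).
have hk : mr y 0%N / dl < k%:R by apply: archi_boundP; rewrite divr_ge0 ?mr_ge0 ?ltW.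
have := le_trans (mr_ge0 y (k * M.+1)) (iter k).
rewrite subr_ge0 -ler_pdivlMr // => h.
by have := lt_le_trans hk h; rewrite ltxx.
Qed.

Lemma stat l : (edist 0 (stat_set O gf lam cs y l) <= (Lb l * fnorm (y l.+1 - y l))%:E)%E.
Proof.
have [Lp _] := Lb_bound (fun j _ => allO j) (hstep l).
have [xi [hxi [L0 [hL0 [i [u [hpp [_ [_ [eLb hy]]]]]]]]]] := hstep l.
have [Ou [hN _]] := hpp i (leqnn i).
have hvN := lim_cone Lp hN.
rewrite -hy in hvN.
have hs := xi_res hcs hxi.
set w := gf (y l) + Lb l *: (trial gh (y l) xi L0 tau i - y l.+1) + (Gf cs lam (y l) - xi).
have Sw : stat_set O gf lam cs y l w by exists (Lb l *: (trial gh (y l) xi L0 tau i - y l.+1)), (Gf cs lam (y l) - xi).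
have hw : w = Lb l *: (y l - y l.+1).
  rewrite /w /trial -eLb hgh.
  have Lb0 : Lb l != 0 by rewrite gt_eqF.
  apply/matrixP => a b; rewrite !mxE.
  by field.
apply: ereal_inf_lbound; exists w => //.
by rewrite sub0r fnormN hw fnormZ gtr0_norm // fnormB.
Qed.

End WholeRun.

End Run.
Theorem theorem3p1 (R : realType) (n N r : nat) (rs : 'I_N -> nat)
  (v : variant) (f : 'rV[R]_(N * n) -> R) (gf : 'rV[R]_(N * n) -> 'rV[R]_(N * n))
  (lam : R) (gh : 'rV[R]_(N * n) -> 'rV[R]_(N * n))
  (y0 : 'rV[R]_(N * n)) (Lmin Lmax tau c : R) (M : nat) :
  (1 <= n)%N -> (1 <= N)%N ->
  (forall i, 0 < rs i)%N -> (0 < r)%N ->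
  (forall i, rs i <= r)%N -> (r <= (n - 1) %/ 2)%N ->
  (forall y, 0 <= f y) -> level_bounded f ->
  is_gradient f gf -> lipschitz gf ->
  0 < lam ->
  is_gradient (hfun f (comps R n r rs v) lam) gh ->
  @Omega R N n r rs v y0 ->
  0 < Lmin -> Lmin < Lmax -> 1 < tau -> 0 < c ->
  let O := @Omega R N n r rs v in
  let cs := comps R n r rs v in
  let F := Flam f O cs lam in
  let Xi := xiset lam cs in
  (* (i) the line search at every reached iteration l is well defined and
     terminates, whatever admissible choices are made *)
  (forall (l : nat) (y : nat -> 'rV[R]_(N * n)), y 0%N = y0 ->
     (forall j, (j < l)%N -> exists Lb,
        alg_step O Xi gh F M c Lmin Lmax tau y j Lb) ->
     (exists xi, Xi (y l) xi) /\
     forall xi, Xi (y l) xi -> forall L0, Lmin <= L0 <= Lmax ->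
       (forall j, exists u, pseudo_proj O (trial gh (y l) xi L0 tau j) (y l) u) /\
       forall u : nat -> 'rV[R]_(N * n),
         (forall j, pseudo_proj O (trial gh (y l) xi L0 tau j) (y l) (u j)) ->
         exists i, ls_ok F M c y l (u i)) /\
  (* (ii) and (iii), for every run of the algorithm *)
  (forall (y : nat -> 'rV[R]_(N * n)) (Lb : nat -> R), y 0%N = y0 ->
     (forall l, alg_step O Xi gh F M c Lmin Lmax tau y l (Lb l)) ->
     (exists B : R, forall l, `|Lb l| <= B) /\
     forall eps : R, 0 < eps -> exists l : nat,
       fnorm (y l.+1 - y l) <= eps /\
       (F (y l) <= F (y 0%N))%E /\
       (edist 0 (stat_set O gf lam cs y l) <= eps%:E)%E).
Proof.
move=> _ _ _ _ _ _ f0 _ hf [Lg' hLg'] l0 hh Oy0 Lmin0 LminLmax tau1 c0 O cs F Xi.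
set Lg := Num.max Lg' 0.
have Lg0 : 0 <= Lg by rewrite le_max lexx orbT.
have hL : forall x z, fnorm (gf x - gf z) <= Lg * fnorm (x - z).
  move=> x z; apply: le_trans (hLg' x z) _; apply: ler_wpM2r; first exact: fnorm_ge0.
  by rewrite le_max lexx.
have hcs : allcl cs := allcl_comps R n r rs v.
have hgh := gh_eq hf hcs l0 hh.
have hO : sclosed O := @Omega_closed R N n r rs v.
split.
  move=> l y hy0 hs.
  exact: (part_i (M := M) hcs hf hL Lg0 l0 hgh f0 c0 Lmin0 tau1 hO Oy0 hy0 hs).
move=> y Lb hy0 hstep.
have hOall := allO hy0 Oy0 hstep.
set Bd := Lmax + tau * Lthr cs lam Lg c.
have hBd : forall l, 0 < Lb l /\ Lb l <= Bd.
  move=> l; exact: (Lb_bound hcs hf hL Lg0 l0 hgh f0 c0 Lmin0 tau1 (fun j _ => hOall j) (hstep l)).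
have Bd0 : 0 <= Bd by have [h1 h2] := hBd 0%N; apply: le_trans h2; apply: ltW.
split.
  by exists Bd => l; have [h1 h2] := hBd l; rewrite gtr0_norm.
move=> eps e0.
have B1 : 0 < Bd + 1 by rewrite ltr_wpDl.
have e1 : 0 < eps / (Bd + 1) by rewrite divr_gt0.
have [l hl] := small_step l0 f0 c0 hy0 Oy0 hstep e1.
exists l; split.
  apply: le_trans hl _; rewrite ler_pdivrMr // mulrDr mulr1 lerDr.
  by apply: mulr_ge0 => //; exact: ltW.
split.
  rewrite /F (Flam_in cs f lam (hOall l)) (Flam_in cs f lam (hOall 0%N)).
  rewrite lee_fin; exact: (F_le l0 f0 c0 hy0 Oy0 hstep).
apply: (le_trans (stat hcs hf hL Lg0 l0 hgh f0 c0 Lmin0 tau1 hy0 Oy0 hstep l)).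
rewrite lee_fin.
have [h1 h2] := hBd l.
apply: le_trans (_ : Bd * (eps / (Bd + 1)) <= _).
  apply: ler_pM => //; [exact: ltW | exact: fnorm_ge0].
by rewrite mulrA ler_pdivrMr // [Bd * eps]mulrC ler_pM2l // lerDl.
Qed.
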